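(* Let $p\ge1$ and $z$ be integers with $1\le z\le 2p-1$, $Z=\{-z+1,\dots,2p-z\}$, $Z'=\{-z,\dots,2p-z\}$. Let $h$ be an entropy conservative, symmetric, consistent and smooth two-point flux with entropy flux $H$, and let $A=(A_{lm})_{l,m\in Z}$, $B=(B_{lm})_{l,m\in Z'}$ be real matrices inducing an entropy conservative flux combination, i.e. with $\tilde A_{lm}:=A_{l+1,m+1}$ if $l+1,m+1\in Z$ and $\tilde A_{lm}:=0$ otherwise ($l,m\in Z'$), and $v_m:=(B_{0m}-\tilde A_{0m})+(B_{m0}-\tilde A_{m0})$: $\sum_{l,m\in Z'}\tilde A_{lm}=\sum_{l,m\in Z'}B_{lm}=1$, $\tilde A_{lm}=B_{lm}$ for $l,m\in Z'\setminus\{0\}$, $A_{ll}=0$ for $l\in Z$, and $v_0=0$. Let $g$ be an entropy dissipative two-point flux with entropy flux $G$, let $\alpha\in[0,1]$, and assume $A_{01}\ge0$, $A_{10}\ge0$, $B_{01}\ge0$, $B_{10}\ge0$. Define the families $$\varphi_{lm}(a,b)=\begin{cases}\alpha g(a,b)+(1-\alpha)h(a,b),&(l,m)=(0,1),\\ \alpha g(b,a)+(1-\alpha)h(a,b),&(l,m)=(1,0),\\ h(a,b),&\text{otherwise},\end{cases}\qquad \Phi_{lm}(a,b)=\begin{cases}\alpha G(a,b)+(1-\alpha)H(a,b),&(l,m)=(0,1),\\ \alpha G(b,a)+(1-\alpha)H(a,b),&(l,m)=(1,0),\\ H(a,b),&\text{otherwise},\end{cases}$$ and the general linear combined fluxes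 $$f_{k-\frac12}=\sum_{l,m\in Z}A_{lm}\varphi_{lm}(u_{k-1+l},u_{k-1+m}),\qquad f_{k+\frac12}=\sum_{l,m\in Z'}B_{lm}\varphi_{lm}(u_{k+l},u_{k+m}),$$ with $F_{k\pm\frac12}$ defined identically with $\Phi_{lm}$ in place of $\varphi_{lm}$. Then the resulting flux is entropy dissipative with numerical entropy flux $F$: for all states, $v(u_k)\cdot(f_{k-\frac12}-f_{k+\frac12})\le F_{k-\frac12}-F_{k+\frac12}$, so that along solutions of $\frac{\mathrm{d}u_k}{\mathrm{d}t}=\frac1{\Delta x}(f_{k-\frac12}-f_{k+\frac12})$ one has $\frac{\mathrm{d}}{\mathrm{d}t}U(u_k)\le\frac1{\Delta x}(F_{k-\frac12}-F_{k+\frac12})$.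
   Context: Conservation law $\partial_t u+\partial_x f(u)=0$, $u\in\mathbb{R}^N$, with smooth strictly convex entropy $U$, entropy flux $F$, entropy variable $v(u)=\nabla U(u)$, potential $\psi(u)=v(u)\cdot f(u)-F(u)$. A two-point flux $h$ is symmetric if $h(a,b)=h(b,a)$, consistent if $h(a,a)=f(a)$, entropy conservative if $(v(b)-v(a))\cdot h(a,b)=\psi(b)-\psi(a)$ for all $a,b$, with entropy flux $H(a,b)=\tfrac12(v(a)+v(b))\cdot h(a,b)-\tfrac12(\psi(a)+\psi(b))$. A two-point flux $g$ is entropy dissipative if $(v(b)-v(a))\cdot g(a,b)-(\psi(b)-\psi(a))\le0$ for all $a,b$, with entropy flux $G(a,b)=\tfrac12(v(a)+v(b))\cdot g(a,b)-\tfrac12(\psi(a)+\psi(b))$. Uniform mesh width $\Delta x$. *)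

(* Defs.v *)
From HB Require Import structures.
From mathcomp Require Import all_boot all_order all_algebra.
From mathcomp Require Import all_classical all_reals all_analysis.
Set Implicit Arguments. Unset Strict Implicit. Unset Printing Implicit Defensive.
Import Order.TTheory GRing.Theory Num.Theory.
Import numFieldNormedType.Exports.
Local Open Scope ring_scope.

Section Defs.
Variables (R : realType) (N : nat).
Notation state := 'rV[R]_N.

Definition dot (a b : state) : R := \sum_(i < N) a ord0 i * b ord0 i.

Definition Zset (p z : nat) : seq int :=
  [seq (i%:Z - z%:Z + 1) | i <- iota 0 (2 * p)].
Definition Zpset (p z : nat) : seq int :=
  [seq (i%:Z - z%:Z) | i <- iota 0 (2 * p).+1].

Definition strictly_convex (U : state -> R) :=
  forall (a b : state) (t : R), a != b -> 0 < t < 1 ->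
    U (t *: a + (1 - t) *: b) < t * U a + (1 - t) * U b.

Definition potential (v f : state -> state) (F : state -> R) (u : state) : R :=
  dot (v u) (f u) - F u.

Definition symmetric_flux (h : state -> state -> state) :=
  forall a b, h a b = h b a.
Definition consistent_flux (f : state -> state) (h : state -> state -> state) :=
  forall a, h a a = f a.
Definition entropy_conservative (v : state -> state) (psi : state -> R)
  (h : state -> state -> state) :=
  forall a b, dot (v b - v a) (h a b) = psi b - psi a.
Definition entropy_dissipative (v : state -> state) (psi : state -> R)
  (g : state -> state -> state) :=
  forall a b, dot (v b - v a) (g a b) - (psi b - psi a) <= 0.
Definition two_point_entropy_flux (v : state -> state) (psi : state -> R)
  (h : state -> state -> state) (a b : state) : R :=
  2^-1 * dot (v a + v b) (h a b) - 2^-1 * (psi a + psi b).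

Definition Atilde (p z : nat) (A : int -> int -> R) (l m : int) : R :=
  if (l + 1 \in Zset p z) && (m + 1 \in Zset p z) then A (l + 1) (m + 1) else 0.

Definition vcoef (p z : nat) (A B : int -> int -> R) (m : int) : R :=
  (B 0 m - Atilde p z A 0 m) + (B m 0 - Atilde p z A m 0).

Definition phi_fam (alpha : R) (g h : state -> state -> state) (l m : int)
  (a b : state) : state :=
  if (l == 0) && (m == 1) then alpha *: g a b + (1 - alpha) *: h a b
  else if (l == 1) && (m == 0) then alpha *: g b a + (1 - alpha) *: h a b
  else h a b.
Definition Phi_fam (alpha : R) (G H : state -> state -> R) (l m : int)
  (a b : state) : R :=
  if (l == 0) && (m == 1) then alpha * G a b + (1 - alpha) * H a b
  else if (l == 1) && (m == 0) then alpha * G b a + (1 - alpha) * H a b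
  else H a b.

Definition flux_minus (p z : nat) (A : int -> int -> R)
  (phi : int -> int -> state -> state -> state) (u : int -> state) (k : int) : state :=
  \sum_(l <- Zset p z) \sum_(m <- Zset p z) A l m *: phi l m (u (k - 1 + l)) (u (k - 1 + m)).
Definition flux_plus (p z : nat) (B : int -> int -> R)
  (phi : int -> int -> state -> state -> state) (u : int -> state) (k : int) : state :=
  \sum_(l <- Zpset p z) \sum_(m <- Zpset p z) B l m *: phi l m (u (k + l)) (u (k + m)).
Definition eflux_minus (p z : nat) (A : int -> int -> R)
  (Phi : int -> int -> state -> state -> R) (u : int -> state) (k : int) : R :=
  \sum_(l <- Zset p z) \sum_(m <- Zset p z) A l m * Phi l m (u (k - 1 + l)) (u (k - 1 + m)).
Definition eflux_plus (p z : nat) (B : int -> int -> R)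
  (Phi : int -> int -> state -> state -> R) (u : int -> state) (k : int) : R :=
  \sum_(l <- Zpset p z) \sum_(m <- Zpset p z) B l m * Phi l m (u (k + l)) (u (k + m)).

End Defs.

(* Main.v *)
Require Import Defs.
From HB Require Import structures.
From mathcomp Require Import all_boot all_order all_algebra.
From mathcomp Require Import all_classical all_reals all_analysis.
From mathcomp Require Import zify ring lra.
Import Order.TTheory GRing.Theory Num.Theory.
Import numFieldNormedType.Exports.
Local Open Scope ring_scope.

Lemma dotDr (R : realType) (N : nat) (x a b : 'rV[R]_N) :
  dot x (a + b) = dot x a + dot x b.
Proof. by rewrite /dot -big_split /=; apply: eq_bigr => i _; rewrite mxE mulrDr. Qed.
Lemma dotZr (R : realType) (N : nat) (x a : 'rV[R]_N) (c : R) :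
  dot x (c *: a) = c * dot x a.
Proof. by rewrite /dot mulr_sumr; apply: eq_bigr => i _; rewrite mxE mulrCA. Qed.
Lemma dotNr (R : realType) (N : nat) (x a : 'rV[R]_N) : dot x (- a) = - dot x a.
Proof. by rewrite -scaleN1r dotZr mulN1r. Qed.
Lemma dotBr (R : realType) (N : nat) (x a b : 'rV[R]_N) :
  dot x (a - b) = dot x a - dot x b.
Proof. by rewrite dotDr dotNr. Qed.
Lemma dot0r (R : realType) (N : nat) (x : 'rV[R]_N) : dot x 0 = 0.
Proof. by rewrite -(scale0r 0) dotZr mul0r. Qed.
Lemma dotDl (R : realType) (N : nat) (x a b : 'rV[R]_N) :
  dot (a + b) x = dot a x + dot b x.
Proof. by rewrite /dot -big_split /=; apply: eq_bigr => i _; rewrite mxE mulrDl. Qed.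
Lemma dotBl (R : realType) (N : nat) (x a b : 'rV[R]_N) :
  dot (a - b) x = dot a x - dot b x.
Proof.
rewrite /dot -sumrB /=; apply: eq_bigr => i _; rewrite !mxE mulrBl //.
Qed.
Lemma dot_sumr (R : realType) (N : nat) (I : Type) (s : seq I) (x : 'rV[R]_N)
  (G : I -> 'rV[R]_N) :
  dot x (\sum_(i <- s) G i) = \sum_(i <- s) dot x (G i).
Proof.
elim: s => [|a s IH]; first by rewrite !big_nil dot0r.
by rewrite !big_cons dotDr IH.
Qed.

Section K.
Variables (R : realType) (N : nat) (v : 'rV[R]_N -> 'rV[R]_N) (psi : 'rV[R]_N -> R).

Lemma ec_left h (hec : entropy_conservative v psi h) a b :
  dot (v a) (h a b) - two_point_entropy_flux v psi h a b = psi a.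
Proof.
have := hec a b; rewrite /two_point_entropy_flux dotBl dotDl => e.
lra.
Qed.
Lemma ec_right h (hec : entropy_conservative v psi h) a b :
  dot (v b) (h a b) - two_point_entropy_flux v psi h a b = psi b.
Proof.
have := hec a b; rewrite /two_point_entropy_flux dotBl dotDl => e.
lra.
Qed.
Lemma ed_right g (hed : entropy_dissipative v psi g) a b :
  dot (v b) (g a b) - two_point_entropy_flux v psi g a b <= psi b.
Proof.
have := hed a b; rewrite /two_point_entropy_flux dotBl dotDl => e.
lra.
Qed.
Lemma ed_left g (hed : entropy_dissipative v psi g) a b :
  psi a <= dot (v a) (g a b) - two_point_entropy_flux v psi g a b.
Proof.
have := hed a b; rewrite /two_point_entropy_flux dotBl dotDl => e.
lra.
Qed.
End K.
Arguments ec_left {R N v psi h}.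
Arguments ec_right {R N v psi h}.
Arguments ed_left {R N v psi g}.
Arguments ed_right {R N v psi g}.
Section D.
Variables (R : realType) (N : nat) (v : 'rV[R]_N -> 'rV[R]_N) (psi : 'rV[R]_N -> R).
Variables (g h : 'rV[R]_N -> 'rV[R]_N -> 'rV[R]_N).
Hypothesis (hec : entropy_conservative v psi h) (hed : entropy_dissipative v psi g).
Variables (alpha : R) (ha : 0 <= alpha <= 1).
Let H := two_point_entropy_flux v psi h.
Let G := two_point_entropy_flux v psi g.

Lemma Dupper (c a b : 'rV[R]_N) (l m : int) (w : R) :
  (a = c /\ ~~ ((l == 0) && (m == 1))) \/ (b = c /\ ~~ ((l == 1) && (m == 0))) ->
  (((l == 0) && (m == 1)) || ((l == 1) && (m == 0)) -> 0 <= w) ->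
  w * (dot (v c) (phi_fam alpha g h l m a b) - Phi_fam alpha G H l m a b)
   <= w * psi c.
Proof.
move=> hc hw; rewrite /phi_fam /Phi_fam.
have /andP[a0 a1] := ha.
case E1: ((l == 0) && (m == 1)) => /=.
  have {hc} [bc _] : b = c /\ ~~ ((l == 1) && (m == 0)) by case: hc => -[] // _; rewrite E1.
  subst c; apply: ler_wpM2l; first by apply: hw; rewrite E1.
  rewrite dotDr !dotZr.
  have := ed_right hed a b; have := ec_right hec a b; rewrite /G /H; nra.
case E2: ((l == 1) && (m == 0)) => /=.
  have {hc} [ac _] : a = c /\ ~~ ((l == 0) && (m == 1)) by case: hc => -[] // _; rewrite E2.
  subst c; apply: ler_wpM2l; first by apply: hw; rewrite E2 orbT.
  rewrite dotDr !dotZr.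
  have := ed_right hed b a; have := ec_left hec a b; rewrite /G /H; nra.
case: hc => -[-> _]; [rewrite ec_left // | rewrite ec_right //].
Qed.

Lemma Dlower (c a b : 'rV[R]_N) (l m : int) (w : R) :
  (a = c /\ ~~ ((l == 1) && (m == 0))) \/ (b = c /\ ~~ ((l == 0) && (m == 1))) ->
  (((l == 0) && (m == 1)) || ((l == 1) && (m == 0)) -> 0 <= w) ->
  w * psi c <=
  w * (dot (v c) (phi_fam alpha g h l m a b) - Phi_fam alpha G H l m a b).
Proof.
move=> hc hw; rewrite /phi_fam /Phi_fam.
have /andP[a0 a1] := ha.
case E1: ((l == 0) && (m == 1)) => /=.
  have {hc} [ac _] : a = c /\ ~~ ((l == 1) && (m == 0)) by case: hc => -[] // _; rewrite E1.
  subst c; apply: ler_wpM2l; first by apply: hw; rewrite E1.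
  rewrite dotDr !dotZr.
  have := ed_left hed a b; have := ec_left hec a b; rewrite /G /H; nra.
case E2: ((l == 1) && (m == 0)) => /=.
  have {hc} [bc _] : b = c /\ ~~ ((l == 0) && (m == 1)) by case: hc => -[] // _; rewrite E2.
  subst c; apply: ler_wpM2l; first by apply: hw; rewrite E2 orbT.
  rewrite dotDr !dotZr.
  have := ed_left hed b a; have := ec_right hec a b; rewrite /G /H; nra.
case: hc => -[-> _]; [rewrite ec_left // | rewrite ec_right //].
Qed.
End D.
Lemma Atilde_ge0 (R : realType) p z (A : int -> int -> R) l m :
  0 <= A 0 1 -> 0 <= A 1 0 ->
  ((l + 1 == 0) && (m + 1 == 1)) || ((l + 1 == 1) && (m + 1 == 0)) ->
  0 <= Atilde p z A l m.
Proof.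
move=> h01 h10; rewrite /Atilde; case: ifP => // _.
by case/orP => /andP[/eqP -> /eqP ->].
Qed.

Lemma reindex (R : realType) p z (A : int -> int -> R) (F : int -> int -> R) :
  \sum_(l <- Zset p z) \sum_(m <- Zset p z) A l m * F l m =
  \sum_(l <- Zpset p z) \sum_(m <- Zpset p z) Atilde p z A l m * F (l + 1) (m + 1).
Proof.
set n := (2 * p)%N.
set s := [seq i%:Z - z%:Z | i <- iota 0 n].
have eZ : Zset p z = [seq x + 1 | x <- s] by rewrite /Zset /s -map_comp.
have eZp : Zpset p z = rcons s (n%:Z - z%:Z).
  by rewrite /Zpset /s -addn1 iotaD map_cat /= cats1.
have nZ : (n%:Z - z%:Z + 1) \notin Zset p z.
  apply/negP; rewrite /Zset => /mapP [i]; rewrite mem_iota => /andP[_ hi] e.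
  have : n%:Z = i%:Z by move: e => /addIr /addIr.
  move=> /eqP; rewrite eqz_nat => /eqP ein; by move: hi; rewrite -ein ltnn.
have inZ : forall x, x \in s -> x + 1 \in Zset p z by move=> x xs; rewrite eZ; apply: (map_f (fun y => y + 1)).
rewrite eZp big_rcons /= [X in _ + X]big1 ?addr0; last first.
  by move=> m _; rewrite /Atilde (negbTE nZ) /= mul0r.
rewrite eZ big_map big_seq [RHS]big_seq; apply: eq_bigr => l ls.
rewrite big_rcons /= /Atilde (negbTE nZ) andbF mul0r addr0 inZ //=.
rewrite big_map big_seq [RHS]big_seq; apply: eq_bigr => m ms.
by rewrite inZ.
Qed.
Theorem mainTheorem4 (R : realType) (N : nat)
  (f : 'rV[R]_N -> 'rV[R]_N) (U F : 'rV[R]_N -> R) (v : 'rV[R]_N -> 'rV[R]_N)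
  (hUconv : strictly_convex U)
  (hv : forall u, differentiable U u /\ forall w, 'd U u w = dot (v u) w)
  (hF : forall u, differentiable f u /\ differentiable F u /\
          forall w, 'd F u w = dot (v u) ('d f u w))
  (p z : nat) (hp : (1 <= p)%N) (hz1 : (1 <= z)%N) (hz2 : (z <= 2 * p - 1)%N)
  (h : 'rV[R]_N -> 'rV[R]_N -> 'rV[R]_N)
  (h_ec : entropy_conservative v (potential v f F) h)
  (h_sym : symmetric_flux h) (h_cons : consistent_flux f h)
  (A B : int -> int -> R)
  (hA1 : \sum_(l <- Zpset p z) \sum_(m <- Zpset p z) Atilde p z A l m = 1)
  (hB1 : \sum_(l <- Zpset p z) \sum_(m <- Zpset p z) B l m = 1)
  (hAB : forall l m, l \in Zpset p z -> m \in Zpset p z -> l != 0 -> m != 0 ->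
           Atilde p z A l m = B l m)
  (hAdiag : forall l, l \in Zset p z -> A l l = 0)
  (hv0 : vcoef p z A B 0 = 0)
  (g : 'rV[R]_N -> 'rV[R]_N -> 'rV[R]_N)
  (g_ed : entropy_dissipative v (potential v f F) g)
  (alpha : R) (halpha : 0 <= alpha <= 1)
  (hA01 : 0 <= A 0 1) (hA10 : 0 <= A 1 0) (hB01 : 0 <= B 0 1) (hB10 : 0 <= B 1 0) :
  let H := two_point_entropy_flux v (potential v f F) h in
  let G := two_point_entropy_flux v (potential v f F) g in
  let phi := phi_fam alpha g h in
  let Phi := Phi_fam alpha G H in
  (forall (u : int -> 'rV[R]_N) (k : int),
     dot (v (u k)) (flux_minus p z A phi u k - flux_plus p z B phi u k)
       <= eflux_minus p z A Phi u k - eflux_plus p z B Phi u k)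
  /\
  (forall (dx : R) (uu : int -> R -> 'rV[R]_N), 0 < dx ->
     (forall k t, derivable (uu k) t 1 /\
        'D_1 (uu k) t = dx^-1 *: (flux_minus p z A phi (fun j => uu j t) k
                                  - flux_plus p z B phi (fun j => uu j t) k)) ->
     forall k t, derivable (fun s => U (uu k s)) t 1 /\
       'D_1 (fun s => U (uu k s)) t
         <= dx^-1 * (eflux_minus p z A Phi (fun j => uu j t) k
                     - eflux_plus p z B Phi (fun j => uu j t) k)).
Proof.
move=> H G phi Phi.
have P1 : forall (u : int -> 'rV[R]_N) (k : int),
     dot (v (u k)) (flux_minus p z A phi u k - flux_plus p z B phi u k)
       <= eflux_minus p z A Phi u k - eflux_plus p z B Phi u k.
  move=> u k; rewrite /phi /Phi /G /H.
  set c := u k.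
  set psi := potential v f F.
  set Hf := two_point_entropy_flux v psi h.
  set Gf := two_point_entropy_flux v psi g.
  set ph := phi_fam alpha g h.
  set Ph := Phi_fam alpha Gf Hf.
  have eM : dot (v c) (flux_minus p z A ph u k) - eflux_minus p z A Ph u k =
    \sum_(l <- Zset p z) \sum_(m <- Zset p z) A l m *
      (dot (v c) (ph l m (u (k - 1 + l)) (u (k - 1 + m))) - Ph l m (u (k - 1 + l)) (u (k - 1 + m))).
    rewrite /flux_minus /eflux_minus dot_sumr -sumrB; apply: eq_bigr => l _.
    by rewrite dot_sumr -sumrB; apply: eq_bigr => m _; rewrite dotZr mulrBr.
  have eP : dot (v c) (flux_plus p z B ph u k) - eflux_plus p z B Ph u k =
    \sum_(l <- Zpset p z) \sum_(m <- Zpset p z) B l m *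
      (dot (v c) (ph l m (u (k + l)) (u (k + m))) - Ph l m (u (k + l)) (u (k + m))).
    rewrite /flux_plus /eflux_plus dot_sumr -sumrB; apply: eq_bigr => l _.
    by rewrite dot_sumr -sumrB; apply: eq_bigr => m _; rewrite dotZr mulrBr.
  rewrite dotBr -subr_ge0.
  have -> : eflux_minus p z A Ph u k - eflux_plus p z B Ph u k -
     (dot (v c) (flux_minus p z A ph u k) - dot (v c) (flux_plus p z B ph u k)) =
     - ((dot (v c) (flux_minus p z A ph u k) - eflux_minus p z A Ph u k) -
        (dot (v c) (flux_plus p z B ph u k) - eflux_plus p z B Ph u k)) by ring.
  rewrite oppr_ge0 eM eP reindex -sumrB.
  have e1 : forall j, k - 1 + (j + 1) = k + j by move=> j; ring.
  have hsum : \sum_(l <- Zpset p z) \sum_(m <- Zpset p z) (Atilde p z A l m - B l m) * psi c = 0.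
    have -> : \sum_(l <- Zpset p z) \sum_(m <- Zpset p z) (Atilde p z A l m - B l m) * psi c
      = (\sum_(l <- Zpset p z) \sum_(m <- Zpset p z) Atilde p z A l m -
         \sum_(l <- Zpset p z) \sum_(m <- Zpset p z) B l m) * psi c.
      rewrite -sumrB mulr_suml; apply: eq_bigr => l _.
      by rewrite -sumrB mulr_suml; apply: eq_bigr => m _.
    by rewrite hA1 hB1 subrr mul0r.
  apply: (le_trans (_ : _ <= \sum_(l <- Zpset p z) \sum_(m <- Zpset p z) (Atilde p z A l m - B l m) * psi c)); last by rewrite hsum.
  rewrite big_seq [X in _ <= X]big_seq; apply: ler_sum => l hl.
  rewrite -sumrB big_seq [X in _ <= X]big_seq; apply: ler_sum => m hm.
  rewrite !e1.
  have hBs : ((l == 0) && (m == 1)) || ((l == 1) && (m == 0)) -> 0 <= B l m.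
    by case/orP => /andP[/eqP -> /eqP ->].
  have hAs := @Atilde_ge0 R p z A l m hA01 hA10.
  case hl0 : (l == 0).
    have ac : u (k + l) = c by rewrite (eqP hl0) addr0.
    have U1 := @Dupper R N v psi g h h_ec g_ed alpha halpha c (u (k + l)) (u (k + m)) (l + 1) (m + 1) (Atilde p z A l m) (or_introl (conj ac _)) hAs.
    have L2 := @Dlower R N v psi g h h_ec g_ed alpha halpha c (u (k + l)) (u (k + m)) l m (B l m) (or_introl (conj ac _)) hBs.
    rewrite (eqP hl0) /= in U1 L2.
    rewrite -/Hf -/Gf -/ph -/Ph in U1 L2.
    move: U1 L2 => /(_ isT) U1 /(_ isT) L2; rewrite (eqP hl0); nra.
  case hm0 : (m == 0).
    have bc : u (k + m) = c by rewrite (eqP hm0) addr0.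
    have U1 := @Dupper R N v psi g h h_ec g_ed alpha halpha c (u (k + l)) (u (k + m)) (l + 1) (m + 1) (Atilde p z A l m) (or_intror (conj bc _)) hAs.
    have L2 := @Dlower R N v psi g h h_ec g_ed alpha halpha c (u (k + l)) (u (k + m)) l m (B l m) (or_intror (conj bc _)) hBs.
    rewrite (eqP hm0) /= !andbF in U1 L2.
    rewrite -/Hf -/Gf -/ph -/Ph in U1 L2.
    move: U1 L2 => /(_ isT) U1 /(_ isT) L2; rewrite (eqP hm0); nra.
  have hl0' : l != 0 by rewrite hl0.
  have hm0' : m != 0 by rewrite hm0.
  rewrite (hAB _ _ hl hm hl0' hm0') /ph /Ph /phi_fam /Phi_fam.
  have -> : ((l + 1 == 0) && (m + 1 == 1)) = false.
    apply/negbTE; apply/negP => /andP[_ /eqP e].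
    by move/eqP: hm0'; apply; apply/(addIr 1); rewrite e add0r.
  have -> : ((l + 1 == 1) && (m + 1 == 0)) = false.
    apply/negbTE; apply/negP => /andP[/eqP e _].
    by move/eqP: hl0'; apply; apply/(addIr 1); rewrite e add0r.
  have -> : ((l == 0) && (m == 1)) = false by rewrite hl0.
  have -> : ((l == 1) && (m == 0)) = false by rewrite hm0 andbF.
  by rewrite [B l m - B l m]subrr mul0r subrr.
split; first exact: P1.
move=> dx uu hdx hder k t.
have [hd hD] := hder k t.
have dU := (hv (uu k t)).1.
have dg : differentiable (uu k) t by apply/derivable1_diffP.
have dcomp : differentiable (U \o uu k) t := differentiable_comp dg dU.
split; first by apply/derivable1_diffP.
rewrite deriveE // diff_comp //= (hv _).2 -deriveE // hD dotZr.
apply: ler_wpM2l; first by rewrite invr_ge0 ltW.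
exact: P1.
Qed.
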